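(* Let $f\colon(X,\overline p)\to(Y,\overline q)$ be a stratified homotopy equivalence between perverse spaces with $D\overline p=f^*D\overline q$. Then the simplicial map $\mathscr G_{\overline p,\overline q}f\colon\mathscr G_{\overline p}X\to\mathscr G_{\overline q}Y$, $\sigma\mapsto f\circ\sigma$, is a homotopy equivalence.
   Context: Filtered spaces. A filtered space of formal dimension $n$ is a nonempty space $X$ with closed subsets $\emptyset=X_{-1}\subseteq\cdots\subseteq X_{n-1}\subsetneq X_n=X$. Strata are the nonempty connected components of $X_i\setminus X_{i-1}$, with codimension $n-i$. Strata in $X\setminus X_{n-1}$ are regular. Stratified maps and homotopies. A stratified map $f$ sends each stratum $S$ into a stratum $S^f$ with $\operatorname{codim}S^f\le\operatorname{codim}S$. A stratified homotopy between $f$ and $g$ is a stratified map $X\times[0,1]\to Y$ restricting to $f$ and $g$, where $X\times[0,1]$ is filtered by $X_i\times[0,1]$. We write $f\simeq_s g$. Stratified homotopy equivalences. A stratified homotopy equivalence is a stratified map $f\colon X\to Y$ for which there exists a stratified map $g\colon Y\to X$ such that: - $g\circ f\simeq_s\mathrm{id}_X$ and $f\circ g\simeq_s\mathrm{id}_Y$; - $\operatorname{codim}S=\operatorname{codim}S^f$ for all strata $S$ of $X$, and $\operatorname{codim}T=\operatorname{codim}T^g$ for all strata $T$ of $Y$. Perversities. A perversity is a map $\overline p$ from strata to $\mathbb Z\cup\{\pm\infty\}$ vanishing on regular strata. The top perversity is $\overline t(S)=\operatorname{codim}S-2$, and $D\overline p=\overline t-\overline p$. The pullback perversity is $f^*\overline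 q(S)=\overline q(S^f)$. Full simplices and the Gajer space. A simplex $\sigma\colon\Delta^j\to X$ is $\overline p$-allowable if $\dim\sigma^{-1}S\le j-\operatorname{codim}S+\overline p(S)$ for all singular strata. Here $\dim$ is polyhedral dimension, with $\dim\emptyset=-\infty$. A simplex is $\overline p$-full if it and all its iterated faces are allowable. $\mathscr G_{\overline p}X\subseteq\mathrm{Sing}\,X$ consists of the $\overline p$-full simplices. *)

(* Defs.v *)
From HB Require Import structures.
From mathcomp Require Import all_boot all_order all_algebra.
From mathcomp Require Import all_classical all_reals all_analysis.
From mathcomp Require Import Rstruct Rstruct_topology.
Set Implicit Arguments. Unset Strict Implicit. Unset Printing Implicit Defensive.
Import Order.TTheory GRing.Theory Num.Theory.
Local Open Scope classical_set_scope.
Local Open Scope ring_scope.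

Notation RR := Rdefinitions.R.

(* A filtration of formal dimension n is encoded by s : nat -> set X with
   s 0 = X_{-1} = set0 and s (i.+1) = X_i (i = 0..n). Values s k, k > n+1,
   are irrelevant. *)
Definition is_filtration (X : topologicalType) (n : nat) (s : nat -> set X) :=
  [/\ s 0%N = set0,
      (forall i, (i <= n.+1)%N -> closed (s i)),
      (forall i j, (i <= j)%N -> (j <= n.+1)%N -> s i `<=` s j),
      s n.+1 = setT & s n <> setT].

Definition stratum_at (X : topologicalType) (n : nat) (s : nat -> set X)
  (i : nat) (S : set X) :=
  (i <= n)%N /\ exists x, (s i.+1 `\` s i) x /\
     S = connected_component (s i.+1 `\` s i) x.

Definition is_stratum (X : topologicalType) n (s : nat -> set X) (S : set X) :=
  exists i, stratum_at n s i S.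

(* codimension n - i (the level i of a stratum is unique) *)
Definition codim (X : topologicalType) n (s : nat -> set X) (S : set X) : nat :=
  (n - xget 0%N [set i | stratum_at n s i S])%N.

Definition stratum_image (X Y : topologicalType) (nY : nat) (sY : nat -> set Y)
  (f : X -> Y) (S : set X) : set Y :=
  xget set0 [set T | is_stratum nY sY T /\ f @` S `<=` T].

Definition stratified_map (X Y : topologicalType) nX (sX : nat -> set X)
  nY (sY : nat -> set Y) (f : X -> Y) :=
  continuous f /\
  forall S, is_stratum nX sX S ->
    exists T, [/\ is_stratum nY sY T, f @` S `<=` T & (codim nY sY T <= codim nX sX S)%N].

Definition unit_interval : set RR := `[0%R, 1%R].

Definition strat_homotopic (X Y : topologicalType) nX (sX : nat -> set X)
  nY (sY : nat -> set Y) (f g : X -> Y) :=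
  exists H : X * set_type unit_interval -> Y,
    [/\ stratified_map nX (fun i => sX i `*` setT) nY sY H,
        (forall x (t : set_type unit_interval), set_val t = 0%R -> H (x, t) = f x) &
        (forall x (t : set_type unit_interval), set_val t = 1%R -> H (x, t) = g x)].

Definition strat_heq (X Y : topologicalType) nX (sX : nat -> set X)
  nY (sY : nat -> set Y) (f : X -> Y) :=
  stratified_map nX sX nY sY f /\
  exists g : Y -> X,
    [/\ stratified_map nY sY nX sX g,
        strat_homotopic nX sX nX sX (g \o f) id,
        strat_homotopic nY sY nY sY (f \o g) id,
        (forall S, is_stratum nX sX S -> codim nY sY (stratum_image nY sY f S) = codim nX sX S) &
        (forall T, is_stratum nY sY T -> codim nX sX (stratum_image nX sX g T) = codim nY sY T)].

Definition is_perversity (X : topologicalType) n (s : nat -> set X)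
  (p : set X -> \bar int) :=
  forall S, is_stratum n s S -> codim n s S = 0%N -> p S = 0%E.

Definition top_perv (X : topologicalType) n (s : nat -> set X) (S : set X) : \bar int :=
  ((codim n s S)%:Z - 2)%:E.

Definition dual_perv (X : topologicalType) n (s : nat -> set X)
  (p : set X -> \bar int) (S : set X) : \bar int :=
  (top_perv n s S - p S)%E.

Definition pullback_perv (X Y : topologicalType) (nY : nat) (sY : nat -> set Y)
  (f : X -> Y) (q : set Y -> \bar int) (S : set X) : \bar int :=
  q (stratum_image nY sY f S).

Definition tsimplex (j : nat) : set 'rV[RR]_j.+1 :=
  [set x | (forall i, 0 <= x 0 i)%R /\ (\sum_i x 0 i = 1)%R].

Arguments tsimplex : clear implicits.

Definition Delta (j : nat) := set_type (tsimplex j).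

Definition simp_raw m n (th : 'I_m.+1 -> 'I_n.+1) (x : 'rV[RR]_m.+1) : 'rV[RR]_n.+1 :=
  \row_k \sum_(i | th i == k) x 0 i.

Lemma simp_raw_tsimplex m n (th : 'I_m.+1 -> 'I_n.+1) x :
  tsimplex m x -> tsimplex n (simp_raw th x).
Proof.
move=> [x0 x1]; split.
  by move=> k; rewrite mxE; apply: sumr_ge0 => i _.
rewrite -x1 (partition_big th predT) //=.
by apply: eq_bigr => k _; rewrite mxE.
Qed.

Definition simp_map m n (th : 'I_m.+1 -> 'I_n.+1) (x : Delta m) : Delta n :=
  exist _ (simp_raw th (set_val x))
    (mem_set (simp_raw_tsimplex th (set_valP x))).

Definition affine_simplex j k (t : k.+1.-tuple 'rV[RR]_j.+1) : set 'rV[RR]_j.+1 :=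
  [set y | exists c : 'I_k.+1 -> RR, [/\ (forall i, 0 <= c i)%R,
      (\sum_i c i = 1)%R & y = \sum_i c i *: tnth t i]].

(* A has polyhedral dimension <= k: A is contained in a (compact) polyhedron
   of dimension <= k, i.e. a finite union of affine k-simplices *)
Definition polydim_le_nat j (A : set 'rV[RR]_j.+1) (k : nat) :=
  exists ts : seq (k.+1.-tuple 'rV[RR]_j.+1),
    A `<=` \bigcup_(t in [set t | t \in ts]) affine_simplex t.

(* dim A <= d, with dim set0 = -oo *)
Definition polydim_le j (A : set 'rV[RR]_j.+1) (d : \bar int) : Prop :=
  match d with
  | -oo%E => A = set0
  | +oo%E => True
  | (r%:E)%E => if (r < 0)%R then A = set0 else polydim_le_nat A `|r|%N
  end.

Definition allowable (X : topologicalType) n (s : nat -> set X)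
  (p : set X -> \bar int) j (sigma : Delta j -> X) :=
  forall S, is_stratum n s S -> (0 < codim n s S)%N ->
    polydim_le (set_val @` (sigma @^-1` S))
      (((j%:Z - (codim n s S)%:Z)%:E) + p S)%E.

Definition full (X : topologicalType) n (s : nat -> set X)
  (p : set X -> \bar int) j (sigma : Delta j -> X) :=
  forall m (th : 'I_m.+1 -> 'I_j.+1), {homo th : a b / (a < b)%N} ->
    allowable n s p (sigma \o simp_map th).

Definition Gajer (X : topologicalType) n (s : nat -> set X)
  (p : set X -> \bar int) (j : nat) : set (Delta j -> X) :=
  [set sigma | continuous sigma /\ full n s p sigma].

Definition monotone_ord m n (th : 'I_m.+1 -> 'I_n.+1) := {homo th : a b / (a <= b)%N}.

Definition ss_maps_into (X Y : Type) (K : forall n, set (Delta n -> X))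
  (L : forall n, set (Delta n -> Y)) (F : forall n, (Delta n -> X) -> (Delta n -> Y)) :=
  forall n sigma, K n sigma -> L n (F n sigma).

Definition ss_natural (X Y : Type) (K : forall n, set (Delta n -> X))
  (F : forall n, (Delta n -> X) -> (Delta n -> Y)) :=
  forall m n (th : 'I_m.+1 -> 'I_n.+1), monotone_ord th ->
    forall sigma, K n sigma -> F m (sigma \o simp_map th) = F n sigma \o simp_map th.

(* simplicial homotopy K x Delta[1] -> L from F to G; an n-tsimplex of
   Delta[1] is a monotone map [n] -> [1] *)
Definition ss_homotopy (X Y : Type) (K : forall n, set (Delta n -> X))
  (L : forall n, set (Delta n -> Y)) (F G : forall n, (Delta n -> X) -> (Delta n -> Y)) :=
  exists H : forall n, (Delta n -> X) -> ('I_n.+1 -> 'I_2) -> (Delta n -> Y),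
  [/\ (forall n sigma a, K n sigma -> monotone_ord a -> L n (H n sigma a)),
      (forall m n (th : 'I_m.+1 -> 'I_n.+1), monotone_ord th ->
        forall sigma a, K n sigma -> monotone_ord a ->
          H m (sigma \o simp_map th) (a \o th) = H n sigma a \o simp_map th),
      (forall n sigma, K n sigma -> H n sigma (fun _ => ord0) = F n sigma) &
      (forall n sigma, K n sigma -> H n sigma (fun _ => ord_max) = G n sigma)].

Definition ss_heq (X Y : Type) (K : forall n, set (Delta n -> X))
  (L : forall n, set (Delta n -> Y)) (F : forall n, (Delta n -> X) -> (Delta n -> Y)) :=
  [/\ ss_maps_into K L F, ss_natural K F &
    exists G : forall n, (Delta n -> Y) -> (Delta n -> X),
      [/\ ss_maps_into L K G, ss_natural L G,
          ss_homotopy K K (fun n => G n \o F n) (fun n => id) &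
          ss_homotopy L L (fun n => F n \o G n) (fun n => id)]].

(* Main.v *)
Require Import Defs.
From HB Require Import structures.
From mathcomp Require Import all_boot all_order all_algebra.
From mathcomp Require Import all_classical all_reals all_analysis.
From mathcomp Require Import Rstruct Rstruct_topology.
From mathcomp Require Import lra.
Set Implicit Arguments. Unset Strict Implicit. Unset Printing Implicit Defensive.
Import Order.TTheory GRing.Theory Num.Theory.
Local Open Scope classical_set_scope.
Local Open Scope ring_scope.

Definition clamp01 (u : RR) : RR := if u < 0 then 0 else if 1 < u then 1 else u.

Lemma clamp01_in u : unit_interval (clamp01 u).
Proof.
rewrite /unit_interval /= in_itv /= /clamp01.
case: ltrP => h1; first by rewrite lexx ler01.
case: ltrP => h2; first by rewrite ler01 lexx.
by rewrite h1 h2.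
Qed.

Lemma clamp01_lip u v : `|clamp01 u - clamp01 v| <= `|u - v|.
Proof.
have H1 := ler_norm (u - v); have H2 := ler_norm (v - u).
rewrite distrC in H2.
rewrite /clamp01.
by case: (ltrP u 0) => h1; case: (ltrP 1 u) => h2; case: (ltrP v 0) => h3; case: (ltrP 1 v) => h4;
  rewrite ler_norml; apply/andP; split; lra.
Qed.

Lemma clamp01_cont : continuous clamp01.
Proof.
move=> x s /nbhs_ballP [e e0 es]; apply/nbhs_ballP; exists e => // y /= xy.
apply: es; move: xy; rewrite /ball /=.
by apply: le_lt_trans; apply: clamp01_lip.
Qed.

Lemma clamp01_id u : unit_interval u -> clamp01 u = u.
Proof.
rewrite /unit_interval /= in_itv /= => /andP [h1 h2]; rewrite /clamp01.
by rewrite ltNge h1 /= ltNge h2.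
Qed.

Definition clampI (u : RR) : set_type unit_interval :=
  exist _ (clamp01 u) (mem_set (clamp01_in u)).

Lemma clampI_cont : continuous clampI.
Proof.
apply: (@continuous_comp_initial _ _ _ set_val).
exact: clamp01_cont.
Qed.

Lemma clampI_val (t : set_type unit_interval) : clampI (set_val t) = t.
Proof.
case: t => v hv; apply: eq_sig_hprop => /=.
  by move=> x p q; apply: Prop_irrelevance.
by apply: clamp01_id; apply/set_mem.
Qed.

Section Strata.
Variables (X : topologicalType) (n : nat) (s : nat -> set X).
Hypothesis hs : is_filtration n s.

Lemma level_of x : exists i, (i <= n)%N /\ (s i.+1 `\` s i) x.
Proof.
case: hs => s0 _ mono sT _.
have ex : exists k, `[< s k x >] by exists n.+1; apply/asboolP; rewrite sT.
case: (ex_minnP ex) => k /asboolP skx kmin.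
case: k skx kmin => [|k] skx kmin; first by rewrite s0 in skx.
exists k; split; last first.
  split => // hk; have := kmin k (asboolT hk); by rewrite ltnn.
have : (k.+1 <= n.+1)%N by apply: kmin; apply/asboolP; rewrite sT.
by [].
Qed.

Lemma stratum_of x : exists S, is_stratum n s S /\ S x.
Proof.
have [i [hi hx]] := level_of x.
exists (connected_component (s i.+1 `\` s i) x); split.
  by exists i; split => //; exists x.
exact: connected_component_refl.
Qed.

Lemma strata_eq S1 S2 x : is_stratum n s S1 -> is_stratum n s S2 -> S1 x -> S2 x -> S1 = S2.
Proof.
case: hs => s0 _ mono sT _.
move=> [i [hi [x1 [h1 ->]]]] [k [hk [x2 [h2 ->]]]] c1 c2.
have a1 := connected_component_sub c1; have a2 := connected_component_sub c2.
have ik : i = k.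
  case: a1 a2 => [a1 b1] [a2 b2].
  case: (ltngtP i k) => // hik.
    by exfalso; apply: b2; apply: (mono i.+1 k) => //; apply: leq_trans hk _.
  by exfalso; apply: b1; apply: (mono k.+1 i) => //; apply: leq_trans hi _.
subst k.
rewrite (same_connected_component c1) (same_connected_component c2) //.
Qed.

End Strata.

Lemma stratum_image_eq (X Y : topologicalType) nY (sY : nat -> set Y) (hY : is_filtration nY sY)
  (f : X -> Y) (S : set X) (T : set Y) x :
  S x -> is_stratum nY sY T -> f @` S `<=` T -> stratum_image nY sY f S = T.
Proof.
move=> Sx hT fST; rewrite /stratum_image.
have : [set T | is_stratum nY sY T /\ f @` S `<=` T] (xget set0 [set T | is_stratum nY sY T /\ f @` S `<=` T]).
  by apply: xgetPex; exists T.
move=> [h1 h2]; apply: (strata_eq hY h1 hT (x := f x)).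
  by apply: h2; exists x.
by apply: fST; exists x.
Qed.

Lemma polydim_le_sub j (A B : set 'rV[RR]_j.+1) d : A `<=` B -> polydim_le B d -> polydim_le A d.
Proof.
case: d => [r| |] //=.
- case: ifP => _; first by move=> AB B0; rewrite B0 in AB; apply/seteqP; split.
  by move=> AB [ts h]; exists ts; apply: subset_trans h.
- by move=> AB B0; rewrite B0 in AB; apply/seteqP; split.
Qed.

Lemma polydim_le_set0 j d : polydim_le (set0 : set 'rV[RR]_j.+1) d.
Proof.
case: d => [r| |] //=.
by case: ifP => _ //; exists [::].
Qed.

Lemma connected_RR : connected (setT : set RR).
Proof. by apply/connected_intervalP => x y _ _ z _. Qed.

Lemma homotopy_strat (X Y : topologicalType) nX (sX : nat -> set X) nY (sY : nat -> set Y)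
  (hX : is_filtration nX sX)
  (H : X * set_type unit_interval -> Y) :
  stratified_map nX (fun i => sX i `*` setT) nY sY H ->
  forall x t t', exists T, [/\ is_stratum nY sY T, T (H (x, t)) & T (H (x, t'))].
Proof.
move=> [Hc Hs] x t t'.
have [i [hi [hx1 hx2]]] := level_of hX x.
pose A := (sX i.+1 `*` (setT : set (set_type unit_interval))) `\` (sX i `*` setT).
have Axt : A (x, t) by split => //= -[].
have hSt : is_stratum nX (fun i => sX i `*` setT) (connected_component A (x, t)).
  by exists i; split => //; exists (x, t).
have [T [hT HT _]] := Hs _ hSt.
pose B := (fun u => (x, clampI u)) @` (setT : set RR).
have BS : B `<=` connected_component A (x, t).
  apply: connected_component_max.
  - by exists (set_val t) => //; rewrite clampI_val.
  - by move=> _ [u _ <-]; split => //= -[].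
  apply: connected_continuous_connected; first exact: connected_RR.
  apply: continuous_subspaceT => u.
  have cu : clampI @ u --> clampI u by apply: clampI_cont.
  have := cvg_pair (@cvg_cst _ x _ (nbhs u) _) cu.
  exact.
exists T; split => //; apply: HT.
  by exists (x, t) => //; apply: BS; exists (set_val t) => //; rewrite clampI_val.
by exists (x, t') => //; apply: BS; exists (set_val t') => //; rewrite clampI_val.
Qed.

Lemma allow_transfer (X Y : topologicalType) nX (sX : nat -> set X) nY (sY : nat -> set Y)
  (p : set X -> \bar int) (q : set Y -> \bar int) j (σ : Delta j -> X) (τ : Delta j -> Y) :
  (forall T, is_stratum nY sY T -> (0 < codim nY sY T)%N -> (exists z, T (τ z)) ->
    exists S, [/\ is_stratum nX sX S, τ @^-1` T `<=` σ @^-1` S,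
                  codim nX sX S = codim nY sY T & p S = q T]) ->
  allowable nX sX p σ -> allowable nY sY q τ.
Proof.
move=> h hσ T hT cT.
case: (pselect (exists z, T (τ z))) => [ex|nex].
  have [S [hS sub e1 e2]] := h T hT cT ex.
  rewrite -e1 -e2; apply: polydim_le_sub (hσ S hS _); last by rewrite e1.
  by move=> _ [z hz <-]; exists z => //; apply: sub.
have -> : set_val @` (τ @^-1` T) = set0.
  by apply/seteqP; split => [y [z hz _]|//]; exfalso; apply: nex; exists z.
exact: polydim_le_set0.
Qed.

Lemma dual_cancel (c : int) (a b : \bar int) : (c%:E - a = c%:E - b)%E -> a = b.
Proof.
case: a => [a| |]; case: b => [b| |] //=.
by move=> [] /addrI /oppr_inj ->.
Qed.

Lemma sum_cont (T : topologicalType) (I : Type) (r : seq I) (P : pred I) (F : I -> T -> RR) :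
  (forall i, continuous (F i)) -> continuous (fun x => \sum_(i <- r | P i) F i x).
Proof.
move=> hF; elim: r => [|i r IH].
  have -> : (fun x => \sum_(i <- [::] | P i) F i x) = (fun _ => 0).
    by apply: funext => x; rewrite big_nil.
  exact: cst_continuous.
case: (boolP (P i)) => Pi.
  have -> : (fun x => \sum_(k <- i :: r | P k) F k x) = (F i + (fun x => \sum_(k <- r | P k) F k x)).
    by apply: funext => x; rewrite big_cons Pi.
  move=> x; have h1 : F i @ x --> F i x := hF i x.
  have h2 : (fun x => \sum_(k <- r | P k) F k x) @ x --> \sum_(k <- r | P k) F k x := IH x.
  have := @cvgD RR RR^o T (nbhs x) _ (F i) (fun x => \sum_(k <- r | P k) F k x) _ _ h1 h2. exact.
have -> : (fun x => \sum_(k <- i :: r | P k) F k x) = (fun x => \sum_(k <- r | P k) F k x).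
  by apply: funext => x; rewrite big_cons (negbTE Pi).
exact: IH.
Qed.

Lemma coordD_cont n (i : 'I_n.+1) : continuous (fun x : Delta n => (set_val x) 0 i).
Proof.
move=> x.
apply: (@continuous_comp _ _ _ set_val (fun M : 'rV[RR]_n.+1 => M 0 i)).
  exact: initial_continuous.
exact: coord_continuous.
Qed.

Lemma DeltaP n (x : Delta n) : (forall i, 0 <= (set_val x) 0 i) /\ \sum_i (set_val x) 0 i = 1.
Proof. by have h := set_valP x. Qed.

Definition tsum n (a : 'I_n.+1 -> 'I_2) (x : Delta n) : RR :=
  \sum_(i | a i == ord_max) (set_val x) 0 i.

Lemma tsum_in n a (x : Delta n) : unit_interval (tsum a x).
Proof.
have [h0 h1] := DeltaP x.
rewrite /unit_interval /= in_itv /=; apply/andP; split.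
  by apply: sumr_ge0 => i _.
rewrite -h1 (bigID (fun i => a i == ord_max) predT) /= /tsum.
rewrite lerDl; exact: sumr_ge0.
Qed.

Definition tI n a (x : Delta n) : set_type unit_interval :=
  exist _ (tsum a x) (mem_set (tsum_in a x)).

Lemma tsum_cont n (a : 'I_n.+1 -> 'I_2) : continuous (tsum a).
Proof.
rewrite /tsum; apply: sum_cont => i; exact: coordD_cont.
Qed.

Lemma tI_cont n (a : 'I_n.+1 -> 'I_2) : continuous (tI a).
Proof.
apply: (@continuous_comp_initial _ _ _ set_val).
exact: tsum_cont.
Qed.

Lemma tsum_nat m n (th : 'I_m.+1 -> 'I_n.+1) (a : 'I_n.+1 -> 'I_2) (x : Delta m) :
  tsum (a \o th) x = tsum a (simp_map th x).
Proof.
rewrite /tsum /= /simp_raw.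
rewrite (partition_big th (fun k => a k == ord_max)) //=.
apply: eq_bigr => k hk; rewrite mxE; apply: eq_bigl => i.
by case: (eqVneq (th i) k) => [->|]; rewrite ?hk ?andbT ?andbF.
Qed.

Lemma tI_nat m n (th : 'I_m.+1 -> 'I_n.+1) (a : 'I_n.+1 -> 'I_2) (x : Delta m) :
  tI (a \o th) x = tI a (simp_map th x).
Proof.
apply: eq_sig_hprop => /=; first by move=> y p0 q0; apply: Prop_irrelevance.
exact: tsum_nat.
Qed.

Lemma tsum0 n (x : Delta n) : tsum (fun _ => ord0) x = 0.
Proof. by rewrite /tsum big_pred0. Qed.

Lemma tsum1 n (x : Delta n) : tsum (fun _ => ord_max) x = 1.
Proof. by rewrite /tsum -(DeltaP x).2; apply: eq_bigl => i; rewrite eqxx. Qed.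

Definition zeroI : set_type unit_interval := clampI 0.
Definition oneI : set_type unit_interval := clampI 1.
Lemma zeroI_val : set_val zeroI = 0.
Proof. change (clamp01 0 = 0); rewrite /clamp01 ltxx ltNge ler01 //. Qed.
Lemma oneI_val : set_val oneI = 1.
Proof. change (clamp01 1 = 1); rewrite /clamp01 ltxx ltNge ler01 //. Qed.

Lemma homot_same (X : topologicalType) nX (sX : nat -> set X) (hX : is_filtration nX sX)
  (h : X -> X) : strat_homotopic nX sX nX sX h id ->
  exists HX : X * set_type unit_interval -> X,
   [/\ continuous HX,
       (forall x t, exists S, [/\ is_stratum nX sX S, S (HX (x, t)) & S x]),
       (forall x t, set_val t = 0 -> HX (x, t) = h x) &
       (forall x t, set_val t = 1 -> HX (x, t) = x)].
Proof.
move=> [HX [HXs HX0 HX1]]; exists HX; split => //; first by case: HXs.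
move=> x t; have [S [h1 h2 h3]] := homotopy_strat hX HXs x t oneI.
by exists S; split => //; rewrite -(HX1 x oneI oneI_val).
Qed.

Lemma inj_strat (X Y : topologicalType) nX (sX : nat -> set X) nY (sY : nat -> set Y)
  (hX : is_filtration nX sX) (f : X -> Y) (g : Y -> X) (HX : X * set_type unit_interval -> X) :
  stratified_map nY sY nX sX g ->
  (forall x t, exists S, [/\ is_stratum nX sX S, S (HX (x, t)) & S x]) ->
  (forall x t, set_val t = 0 -> HX (x, t) = (g \o f) x) ->
  forall T, is_stratum nY sY T -> forall w w', T (f w) -> T (f w') ->
   exists S, [/\ is_stratum nX sX S, S w & S w'].
Proof.
move=> [_ gstr] K1 HX0 T hT w w' Tw Tw'.
have [U [hU gTU _]] := gstr T hT.
have [S1 [h1 a1 b1]] := K1 w zeroI; rewrite HX0 ?zeroI_val // in a1.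
have [S2 [h2 a2 b2]] := K1 w' zeroI; rewrite HX0 ?zeroI_val // in a2.
have e1 : S1 = U by apply: (strata_eq hX h1 hU a1); apply: gTU; exists (f w).
have e2 : S2 = U by apply: (strata_eq hX h2 hU a2); apply: gTU; exists (f w').
by exists U; split => //; [rewrite -e1 | rewrite -e2].
Qed.

Lemma full_transfer (X Y : topologicalType) nX (sX : nat -> set X) nY (sY : nat -> set Y)
  (p : set X -> \bar int) (q : set Y -> \bar int) (f : X -> Y) :
  is_filtration nX sX -> is_filtration nY sY -> stratified_map nX sX nY sY f ->
  (forall T, is_stratum nY sY T -> forall w w', T (f w) -> T (f w') ->
     exists S, [/\ is_stratum nX sX S, S w & S w']) ->
  (forall S, is_stratum nX sX S ->
     codim nY sY (stratum_image nY sY f S) = codim nX sX S /\ p S = q (stratum_image nY sY f S)) ->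
  forall j (σ : Delta j -> X), Gajer nX sX p σ -> Gajer nY sY q (f \o σ).
Proof.
move=> hX hY [fc fstr] injf cp j σ [σc σf]; split.
  by move=> x; apply: continuous_comp; [apply: σc | apply: fc].
move=> m th hth.
apply: (allow_transfer (σ := σ \o simp_map th)); last exact: σf m th hth.
move=> T hT cT [z Tz].
have [S0 [hS0 S0z]] := stratum_of hX ((σ \o simp_map th) z).
have [T' [hT' fST' _]] := fstr S0 hS0.
have eT : T' = T by apply: (strata_eq hY hT' hT (x := f ((σ \o simp_map th) z))) => //; apply: fST'; exists ((σ \o simp_map th) z).
subst T'.
have ei := stratum_image_eq hY S0z hT fST'.
have [c1 p1] := cp S0 hS0; rewrite ei in c1 p1.
exists S0; split => //.
move=> w /= Tw.
have [S [hS a b]] := injf T hT _ _ Tz Tw.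
by rewrite -(strata_eq hX hS hS0 a S0z).
Qed.

Lemma homot_gajer (X : topologicalType) nX (sX : nat -> set X) (hX : is_filtration nX sX)
  (p : set X -> \bar int) (HX : X * set_type unit_interval -> X) :
  continuous HX ->
  (forall x t, exists S, [/\ is_stratum nX sX S, S (HX (x, t)) & S x]) ->
  forall n (σ : Delta n -> X) (a : 'I_n.+1 -> 'I_2),
    Gajer nX sX p σ -> Gajer nX sX p (fun x => HX (σ x, tI a x)).
Proof.
move=> HXc K1 n σ a [σc σf]; split.
  move=> x; apply: (@continuous_comp _ _ _ (fun x => (σ x, tI a x)) HX).
    have c1 : σ @ x --> σ x by apply: σc.
    have c2 : tI a @ x --> tI a x by apply: tI_cont.
    have := cvg_pair c1 c2; exact.
  exact: HXc.
move=> m th hth.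
apply: (allow_transfer (σ := σ \o simp_map th)); last exact: σf m th hth.
move=> S hS cS _; exists S; split => //.
move=> w /= Sw.
have [S1 [h1 a1 b1]] := K1 (σ (simp_map th w)) (tI a (simp_map th w)).
by rewrite -(strata_eq hX h1 hS a1 Sw).
Qed.

Theorem mainTheorem11 (X Y : topologicalType) (nX nY : nat)
  (sX : nat -> set X) (sY : nat -> set Y)
  (p : set X -> \bar int) (q : set Y -> \bar int) (f : X -> Y) :
  is_filtration nX sX -> is_filtration nY sY ->
  is_perversity nX sX p -> is_perversity nY sY q ->
  strat_heq nX sX nY sY f ->
  (forall S, is_stratum nX sX S ->
     dual_perv nX sX p S = pullback_perv nY sY f (dual_perv nY sY q) S) ->
  ss_heq (Gajer nX sX p) (Gajer nY sY q) (fun n sigma => f \o sigma).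
Proof.
move=> hX hY _ _ [fs [g [gs hgf hfg cf cg]]] hdual.
have [HX [HXc K1 HX0 HX1]] := homot_same hX hgf.
have [HY [HYc K2 HY0 HY1]] := homot_same hY hfg.
have injf := inj_strat hX gs K1 HX0.
have injg := inj_strat hY fs K2 HY0.
have cpf : forall S, is_stratum nX sX S ->
     codim nY sY (stratum_image nY sY f S) = codim nX sX S /\ p S = q (stratum_image nY sY f S).
  move=> S hS; split; first exact: cf.
  have := hdual S hS; rewrite /pullback_perv /dual_perv /top_perv (cf S hS).
  exact: dual_cancel.
have cpg : forall T, is_stratum nY sY T ->
     codim nX sX (stratum_image nX sX g T) = codim nY sY T /\ q T = p (stratum_image nX sX g T).
  move=> T hT; split; first exact: cg.
  have [y Ty] : exists y, T y by case: hT => i [_ [y [hy ->]]]; exists y; apply: connected_component_refl.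
  have [S [hS gTS _]] := gs.2 T hT.
  have eS := stratum_image_eq hX Ty hS gTS; rewrite eS.
  have [V [hV fSV _]] := fs.2 S hS.
  have gyS : S (g y) by apply: gTS; exists y.
  have eV := stratum_image_eq hY gyS hV fSV.
  have [T1 [h1 a1 b1]] := K2 y zeroI; rewrite HY0 ?zeroI_val // in a1.
  have VT : V = T.
    rewrite -(strata_eq hY h1 hT b1 Ty); apply: (strata_eq hY hV h1 _ a1).
    by apply: fSV; exists (g y).
  have [_ pS] := cpf S hS; rewrite eV VT in pS; by rewrite pS.
split.
- by move=> j σ hσ; apply: (full_transfer hX hY fs injf cpf).
- by [].
exists (fun n (τ : Delta n -> Y) => g \o τ); split.
- move=> j τ hτ; apply: (full_transfer hY hX gs injg _ hτ) => T hT.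
  by have [c1 p1] := cpg T hT; split.
- by [].
- exists (fun n (σ : Delta n -> X) a => fun x => HX (σ x, tI a x)); split.
  + by move=> n σ a hσ _; apply: homot_gajer.
  + by move=> m n th _ σ a _ _; apply: funext => x /=; rewrite tI_nat.
  + by move=> n σ _; apply: funext => x /=; apply: HX0; exact: tsum0.
  + by move=> n σ _; apply: funext => x /=; apply: HX1; exact: tsum1.
- exists (fun n (σ : Delta n -> Y) a => fun x => HY (σ x, tI a x)); split.
  + by move=> n σ a hσ _; apply: homot_gajer.
  + by move=> m n th _ σ a _ _; apply: funext => x /=; rewrite tI_nat.
  + by move=> n σ _; apply: funext => x /=; apply: HY0; exact: tsum0.
  + by move=> n σ _; apply: funext => x /=; apply: HY1; exact: tsum1.
Qed.
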